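(* Let $X$ be a Banach space with $\dim X>1$, $x\in X$ and $T\in L(X)$. If there is a non-zero $f\in X^*$ such that $f(T^nx)=o(\|T^nx\|)$ as $n\to\infty$, then $x$ is not a supercyclic vector for $T$.
   Context: $x$ is a supercyclic vector for $T$ if $\{zT^nx:z\in\mathbb{K},n\in\mathbb{Z}_+\}$ is norm dense in $X$, where $\mathbb{K}\in\{\mathbb{R},\mathbb{C}\}$ is the scalar field. *)

(* Defs.v *)
From Stdlib Require Import Reals.
Open Scope R_scope.

Record Cx : Type := mkC { Re : R ; Im : R }.
Definition Cadd (z w : Cx) : Cx := mkC (Re z + Re w) (Im z + Im w).
Definition Cmul (z w : Cx) : Cx :=
  mkC (Re z * Re w - Im z * Im w) (Re z * Im w + Im z * Re w).
Definition Cabs (z : Cx) : R := sqrt (Re z * Re z + Im z * Im z).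

Definition K (b : bool) : Type := if b then Cx else R.

Definition Kadd (b : bool) : K b -> K b -> K b :=
  match b with true => Cadd | false => Rplus end.
Definition Kmul (b : bool) : K b -> K b -> K b :=
  match b with true => Cmul | false => Rmult end.
Definition K0 (b : bool) : K b :=
  match b with true => mkC 0 0 | false => 0 end.
Definition K1 (b : bool) : K b :=
  match b with true => mkC 1 0 | false => 1 end.
Definition Kabs (b : bool) : K b -> R :=
  match b with true => Cabs | false => Rabs end.

Record NormedSpace (b : bool) : Type := {
  car :> Type;
  vzero : car;
  vadd : car -> car -> car;
  vopp : car -> car;
  vscal : K b -> car -> car;
  norm : car -> R;
  vadd_assoc : forall u v w, vadd u (vadd v w) = vadd (vadd u v) w;
  vadd_comm : forall u v, vadd u v = vadd v u;
  vadd_zero : forall u, vadd u vzero = u;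
  vadd_opp : forall u, vadd u (vopp u) = vzero;
  vscal_one : forall u, vscal (K1 b) u = u;
  vscal_mul : forall a c u, vscal a (vscal c u) = vscal (Kmul b a c) u;
  vscal_addv : forall a u v, vscal a (vadd u v) = vadd (vscal a u) (vscal a v);
  vscal_adds : forall a c u, vscal (Kadd b a c) u = vadd (vscal a u) (vscal c u);
  norm_eq0 : forall u, norm u = 0 -> u = vzero;
  norm_triangle : forall u v, norm (vadd u v) <= norm u + norm v;
  norm_scal : forall a u, norm (vscal a u) = Kabs b a * norm u
}.

Arguments vzero {b} _.
Arguments vadd {b} {_} _ _.
Arguments vopp {b} {_} _.
Arguments vscal {b} {_} _ _.
Arguments norm {b} {_} _.

Definition vsub {b} {X : NormedSpace b} (u v : X) : X := vadd u (vopp v).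

Definition complete {b} (X : NormedSpace b) : Prop :=
  forall u : nat -> X,
    (forall eps, eps > 0 -> exists N, forall m n, (m >= N)%nat -> (n >= N)%nat ->
        norm (vsub (u m) (u n)) < eps) ->
    exists l : X, forall eps, eps > 0 -> exists N, forall n, (n >= N)%nat ->
        norm (vsub (u n) l) < eps.

Definition dim_gt1 {b} (X : NormedSpace b) : Prop :=
  exists u v : X, forall a c : K b,
    vadd (vscal a u) (vscal c v) = vzero X -> a = K0 b /\ c = K0 b.

Definition bounded_operator {b} {X : NormedSpace b} (T : X -> X) : Prop :=
  (forall u v, T (vadd u v) = vadd (T u) (T v)) /\
  (forall a u, T (vscal a u) = vscal a (T u)) /\
  (exists M, forall u, norm (T u) <= M * norm u).

Definition bounded_functional {b} {X : NormedSpace b} (f : X -> K b) : Prop :=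
  (forall u v, f (vadd u v) = Kadd b (f u) (f v)) /\
  (forall a u, f (vscal a u) = Kmul b a (f u)) /\
  (exists M, forall u, Kabs b (f u) <= M * norm u).

Definition orbit {b} {X : NormedSpace b} (T : X -> X) (n : nat) (x : X) : X :=
  Nat.iter n T x.

Definition supercyclic {b} {X : NormedSpace b} (T : X -> X) (x : X) : Prop :=
  forall (y : X) (eps : R), eps > 0 ->
    exists (z : K b) (n : nat), norm (vsub (vscal z (orbit T n x)) y) < eps.

(* Main.v *)
Require Import Defs.
From Stdlib Require Import Reals Arith Lra Lia Psatz List Classical ClassicalEpsilon.
Open Scope R_scope.


Definition Kopp (b : bool) : K b -> K b :=
  match b return K b -> K b with
  | true => fun z => mkC (- Re z) (- Im z)
  | false => Ropp end.
Definition Kr (b : bool) : R -> K b :=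
  match b return R -> K b with
  | true => fun r => mkC r 0
  | false => fun r => r end.

Lemma Kadd_opp b (a : K b) : Kadd b a (Kopp b a) = K0 b.
Proof. destruct b; simpl in *; [unfold Cadd; f_equal; simpl; ring | ring]. Qed.

Lemma Kmul_comm b (a c : K b) : Kmul b a c = Kmul b c a.
Proof. destruct b; simpl in *; [unfold Cmul; f_equal; simpl; ring | ring]. Qed.

Lemma Kmul_0 b (a : K b) : Kmul b a (K0 b) = K0 b.
Proof. destruct b; simpl in *; [unfold Cmul; f_equal; simpl; ring | ring]. Qed.

Lemma Kadd_0 b (a : K b) : Kadd b a (K0 b) = a.
Proof. destruct b; simpl in *; [destruct a; unfold Cadd; simpl; f_equal; ring | ring]. Qed.

Lemma Kadd_Kr b r s : Kadd b (Kr b r) (Kr b s) = Kr b (r + s).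
Proof. destruct b; simpl; [unfold Cadd; f_equal; simpl; ring | ring]. Qed.

Lemma Kabs_K0 b : Kabs b (K0 b) = 0.
Proof. destruct b; simpl; [unfold Cabs; simpl; replace (0*0+0*0) with 0 by ring; apply sqrt_0 | apply Rabs_R0]. Qed.

Lemma Kabs_Kr b r : Kabs b (Kr b r) = Rabs r.
Proof. destruct b; simpl; [unfold Cabs; simpl; replace (r*r+0*0) with (Rsqr r) by (unfold Rsqr; ring); apply sqrt_Rsqr_abs | reflexivity]. Qed.

Lemma Kabs_opp b a : Kabs b (Kopp b a) = Kabs b a.
Proof. destruct b; simpl; [unfold Cabs; simpl; f_equal; ring | apply Rabs_Ropp]. Qed.

Lemma Kabs_K1 b : Kabs b (Kopp b (K1 b)) = 1.
Proof. destruct b; simpl; [unfold Cabs; simpl; replace (_ + _) with 1 by ring; apply sqrt_1 | rewrite Rabs_Ropp; apply Rabs_R1]. Qed.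

Lemma Kabs_nonneg b a : 0 <= Kabs b a.
Proof. destruct b; simpl; [apply sqrt_pos | apply Rabs_pos]. Qed.

Lemma Kabs_pos b a : a <> K0 b -> 0 < Kabs b a.
Proof.
  destruct b; simpl; intros H.
  - destruct a as [x y]; unfold Cabs; simpl. apply sqrt_lt_R0.
    destruct (Req_dec x 0); destruct (Req_dec y 0); subst; try nra. now elim H.
  - apply Rabs_pos_lt; exact H.
Qed.

Lemma Kabs_mul b a c : Kabs b (Kmul b a c) = Kabs b a * Kabs b c.
Proof.
  destruct b; simpl.
  - unfold Cabs, Cmul; simpl. rewrite <- sqrt_mult by nra. f_equal; ring.
  - apply Rabs_mult.
Qed.

Lemma Kabs_tri b a c : Kabs b (Kadd b a c) <= Kabs b a + Kabs b c.
Proof.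
  destruct b; simpl; [|apply Rabs_triang].
  destruct a as [x y]; destruct c as [u v]; unfold Cabs, Cadd; simpl.
  set (X := x*x+y*y). set (Y := u*u+v*v).
  assert (HX : 0 <= X) by (unfold X; nra). assert (HY : 0 <= Y) by (unfold Y; nra).
  pose proof (sqrt_pos X). pose proof (sqrt_pos Y).
  pose proof (sqrt_sqrt X HX). pose proof (sqrt_sqrt Y HY).
  assert (Hcs : x*u + y*v <= sqrt X * sqrt Y).
  { assert (HH : (x*u+y*v)*(x*u+y*v) <= (sqrt X * sqrt Y)*(sqrt X * sqrt Y)).
    { replace ((sqrt X * sqrt Y)*(sqrt X * sqrt Y)) with ((sqrt X * sqrt X)*(sqrt Y * sqrt Y)) by ring. rewrite H1, H2. unfold X, Y. pose proof (Rle_0_sqr (x*v-y*u)) as Hq; unfold Rsqr in Hq; nra. }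
    assert (0 <= sqrt X * sqrt Y) by nra. destruct (Rle_dec (x*u+y*v) (sqrt X * sqrt Y)); [assumption|]. exfalso; nra. }
  rewrite <- (sqrt_Rsqr (sqrt X + sqrt Y)) by lra.
  apply sqrt_le_1_alt. unfold Rsqr. replace ((sqrt X + sqrt Y) * (sqrt X + sqrt Y)) with (sqrt X * sqrt X + sqrt Y * sqrt Y + 2 * (sqrt X * sqrt Y)) by ring. rewrite H1, H2. unfold X, Y in *. nra.
Qed.

Arguments vadd_assoc {b _}. Arguments vadd_comm {b _}. Arguments vadd_zero {b _}.
Arguments vadd_opp {b _}. Arguments vscal_one {b _}. Arguments vscal_mul {b _}.
Arguments vscal_addv {b _}. Arguments vscal_adds {b _}. Arguments norm_eq0 {b _}.
Arguments norm_triangle {b _}. Arguments norm_scal {b _}.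

Lemma vadd_0l {b} {X : NormedSpace b} (u : X) : vadd (vzero X) u = u.
Proof. rewrite vadd_comm. apply vadd_zero. Qed.

Lemma opp_unique {b} {X : NormedSpace b} (u v : X) : vadd u v = vzero X -> v = vopp u.
Proof.
  intros H. rewrite <- (vadd_zero v). rewrite <- (vadd_opp u).
  rewrite vadd_assoc. rewrite (vadd_comm v u), H. apply vadd_0l.
Qed.

Lemma vopp_0 {b} {X : NormedSpace b} : vopp (vzero X) = vzero X.
Proof. symmetry. apply opp_unique. apply vadd_zero. Qed.

Lemma vadd_cancel {b} {X : NormedSpace b} (u v w : X) : vadd u v = vadd u w -> v = w.
Proof.
  intros H. rewrite <- (vadd_0l v), <- (vadd_0l w).
  rewrite <- (vadd_opp u). rewrite (vadd_comm u).
  rewrite <- !vadd_assoc, H. reflexivity.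
Qed.

Lemma vscal_0v {b} {X : NormedSpace b} (u : X) : vscal (K0 b) u = vzero X.
Proof.
  apply (vadd_cancel (vscal (K0 b) u)). rewrite vadd_zero.
  rewrite <- vscal_adds. now rewrite Kadd_0.
Qed.

Lemma vscal_a0 {b} {X : NormedSpace b} (a : K b) : vscal a (vzero X) = vzero X.
Proof.
  apply (vadd_cancel (vscal a (vzero X))). rewrite vadd_zero.
  rewrite <- vscal_addv. now rewrite vadd_zero.
Qed.

Lemma vscal_opp {b} {X : NormedSpace b} (a : K b) (u : X) :
  vscal a (vopp u) = vopp (vscal a u).
Proof. apply opp_unique. rewrite <- vscal_addv, vadd_opp. apply vscal_a0. Qed.

Lemma vscal_Kopp {b} {X : NormedSpace b} (a : K b) (u : X) :
  vscal (Kopp b a) u = vopp (vscal a u).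
Proof. apply opp_unique. rewrite <- vscal_adds, Kadd_opp. apply vscal_0v. Qed.

Lemma vrearr {b} {X : NormedSpace b} (x y z w : X) :
  vadd (vadd x y) (vadd z w) = vadd (vadd x z) (vadd y w).
Proof.
  rewrite <- !vadd_assoc. f_equal. rewrite !vadd_assoc. f_equal. apply vadd_comm.
Qed.

Lemma vopp_add {b} {X : NormedSpace b} (u v : X) :
  vopp (vadd u v) = vadd (vopp u) (vopp v).
Proof.
  symmetry. apply opp_unique. rewrite vrearr, !vadd_opp.
  apply vadd_zero.
Qed.

Lemma vopp_scal {b} {X : NormedSpace b} (u : X) : vopp u = vscal (Kopp b (K1 b)) u.
Proof. rewrite vscal_Kopp, vscal_one. reflexivity. Qed.

Lemma norm_0 {b} {X : NormedSpace b} : norm (vzero X) = 0.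
Proof. rewrite <- (vscal_0v (vzero X)), norm_scal, Kabs_K0. ring. Qed.

Lemma norm_opp {b} {X : NormedSpace b} (u : X) : norm (vopp u) = norm u.
Proof. rewrite vopp_scal, norm_scal, Kabs_K1. ring. Qed.

Lemma norm_nonneg {b} {X : NormedSpace b} (u : X) : 0 <= norm u.
Proof.
  pose proof (norm_triangle u (vopp u)). rewrite vadd_opp, norm_0, norm_opp in H. lra.
Qed.

Lemma norm_pos {b} {X : NormedSpace b} (u : X) : u <> vzero X -> 0 < norm u.
Proof.
  intros H. destruct (norm_nonneg u); auto. exfalso. apply H, norm_eq0; auto.
Qed.

Lemma norm_sub_le {b} {X : NormedSpace b} (u v : X) : norm (vsub u v) <= norm u + norm v.
Proof. unfold vsub. rewrite <- (norm_opp v). apply norm_triangle. Qed.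

Lemma vsub_0 {b} {X : NormedSpace b} (u : X) : vsub u (vzero X) = u.
Proof. unfold vsub. rewrite vopp_0. apply vadd_zero. Qed.

Lemma vsub_decomp {b} {X : NormedSpace b} (u v : X) : vadd (vsub u v) v = u.
Proof. unfold vsub. rewrite <- vadd_assoc, (vadd_comm (vopp v)), vadd_opp. apply vadd_zero. Qed.

Lemma vsub_decomp2 {b} {X : NormedSpace b} (u v : X) : v = vadd u (vopp (vsub u v)).
Proof.
  symmetry. unfold vsub. rewrite vopp_add. rewrite vadd_assoc, vadd_opp, vadd_0l.
  symmetry. apply opp_unique. rewrite vadd_comm. apply vadd_opp.
Qed.

Lemma f_opp {b} {X : NormedSpace b} (f : X -> K b) : bounded_functional f ->
  forall u, f (vopp u) = Kopp b (f u).
Proof.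
  intros [Ha [Hs _]] u. rewrite vopp_scal, Hs. destruct b; simpl in *;
  [destruct (f u); unfold Cmul; simpl; f_equal; ring | ring].
Qed.


Lemma vadd_sub_l {b} {X : NormedSpace b} (y z : X) : vadd (vadd y z) (vopp y) = z.
Proof. rewrite (vadd_comm y), <- vadd_assoc, vadd_opp. apply vadd_zero. Qed.

Definition Pop {b} {X : NormedSpace b} (f : X -> K b) (phi : K b) (p : X) (v : X) : X :=
  vsub (vscal phi v) (vscal (f v) p).

Lemma Pop_add {b} {X : NormedSpace b} (f : X -> K b) phi p : bounded_functional f ->
  forall u v, Pop f phi p (vadd u v) = vadd (Pop f phi p u) (Pop f phi p v).
Proof.
  intros [Ha _] u v. unfold Pop, vsub. rewrite Ha, vscal_addv, vscal_adds, vopp_add.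
  apply vrearr.
Qed.

Lemma Pop_scal {b} {X : NormedSpace b} (f : X -> K b) phi p : bounded_functional f ->
  forall a u, Pop f phi p (vscal a u) = vscal a (Pop f phi p u).
Proof.
  intros [_ [Hs _]] a u. unfold Pop, vsub. rewrite Hs, vscal_addv, vscal_opp.
  rewrite !vscal_mul, (Kmul_comm b phi a). reflexivity.
Qed.

Lemma Pop_p {b} {X : NormedSpace b} (f : X -> K b) phi p : f p = phi ->
  Pop f phi p p = vzero X.
Proof. intros H. unfold Pop, vsub. rewrite H. apply vadd_opp. Qed.

Lemma Pop_w {b} {X : NormedSpace b} (f : X -> K b) phi p w : f w = K0 b ->
  Pop f phi p w = vscal phi w.
Proof. intros H. unfold Pop. rewrite H, vscal_0v. apply vsub_0. Qed.

Lemma Pop_bound {b} {X : NormedSpace b} (f : X -> K b) phi p M :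
  (forall u, Kabs b (f u) <= M * norm u) ->
  forall v, norm (Pop f phi p v) <= (Kabs b phi + M * norm p) * norm v.
Proof.
  intros HM v. unfold Pop. eapply Rle_trans; [apply norm_sub_le|].
  rewrite !norm_scal. pose proof (HM v). pose proof (norm_nonneg p). nra.
Qed.

Lemma sep {b} {X : NormedSpace b} (f : X -> K b) (M : R) (p q w x : X) (a c : K b)
  (delta s B : R) :
  bounded_functional f -> (forall u, Kabs b (f u) <= M * norm u) -> 0 < M ->
  f w = K0 b -> q = vadd p (vscal (Kr b s) w) ->
  0 < Kabs b (f p) -> norm p <= B ->
  norm (vsub (vscal a x) p) < delta -> norm (vsub (vscal c x) q) < delta ->
  M * delta <= Kabs b (f p) / 2 ->
  Rabs s * Kabs b (f p) * norm w <= 4 * (Kabs b (f p) + M * B) * delta.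
Proof.
  intros bf HM HM0 Hw Hq HA HB H1 H2 Hd.
  set (phi := f p) in *. set (A := Kabs b phi) in *.
  set (P := Pop f phi p).
  set (d1 := vsub (vscal a x) p) in *. set (d2 := vsub (vscal c x) q) in *.
  assert (HL : forall v, norm (P v) <= (A + M * B) * norm v).
  { intros v. eapply Rle_trans; [apply Pop_bound; exact HM|].
    pose proof (norm_nonneg v). pose proof (Kabs_nonneg b phi). unfold A. apply Rmult_le_compat_r; [assumption|]. nra. }
  assert (e1 : vscal a x = vadd d1 p) by (symmetry; apply vsub_decomp).
  assert (e2 : vscal c x = vadd d2 q) by (symmetry; apply vsub_decomp).
  assert (Pp : P p = vzero X) by (apply Pop_p; reflexivity).
  assert (Pq : P q = vscal (Kr b s) (vscal phi w)).
  { rewrite Hq. unfold P. rewrite Pop_add, Pop_p, vadd_0l, Pop_scal, Pop_w; auto. }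
  assert (E1 : vscal a (P x) = P d1).
  { unfold P. rewrite <- Pop_scal by auto. fold P. rewrite e1. unfold P.
    rewrite Pop_add, Pop_p, vadd_zero; auto. }
  assert (E2 : vscal c (P x) = vadd (P d2) (P q)).
  { unfold P. rewrite <- Pop_scal by auto. fold P. rewrite e2. unfold P.
    rewrite Pop_add; auto. }
  assert (N1 : Kabs b a * norm (P x) <= (A + M*B) * delta).
  { rewrite <- norm_scal, E1. eapply Rle_trans; [apply HL|]. 
    assert (0 <= A + M*B) by (pose proof (norm_nonneg p); unfold A; pose proof (Kabs_nonneg b phi); nra).
    apply Rmult_le_compat_l; lra. }
  assert (N2 : Rabs s * A * norm w <= Kabs b c * norm (P x) + (A + M*B) * delta).
  { replace (Rabs s * A * norm w) with (norm (P q)) by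
      (rewrite Pq, !norm_scal, Kabs_Kr; unfold A; ring).
    assert (Pq' : P q = vadd (vscal c (P x)) (vopp (P d2))) by (rewrite E2; symmetry; apply vadd_sub_l).
    rewrite Pq'. eapply Rle_trans; [apply norm_triangle|]. rewrite norm_opp, norm_scal.
    assert (norm (P d2) <= (A + M*B) * delta).
    { eapply Rle_trans; [apply HL|].
      assert (0 <= A + M*B) by (pose proof (norm_nonneg p); unfold A; pose proof (Kabs_nonneg b phi); nra).
      apply Rmult_le_compat_l; lra. }
    lra. }
  destruct bf as [Fa [Fs Fb]].
  assert (S1 : A <= Kabs b a * Kabs b (f x) + M * delta).
  { assert (ep : p = vadd (vscal a x) (vopp d1)) by apply vsub_decomp2.
    unfold A, phi. rewrite ep, Fa, f_opp, Fs by (split; auto).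
    eapply Rle_trans; [apply Kabs_tri|]. rewrite Kabs_opp, Kabs_mul.
    pose proof (HM d1). nra. }
  assert (fq : f q = phi).
  { rewrite Hq, Fa, Fs, Hw, Kmul_0, Kadd_0. reflexivity. }
  assert (S2 : Kabs b c * Kabs b (f x) <= A + M * delta).
  { rewrite <- Kabs_mul, <- Fs, e2, Fa, fq. eapply Rle_trans; [apply Kabs_tri|].
    pose proof (HM d2). unfold A. nra. }
  pose proof (Kabs_nonneg b a). pose proof (Kabs_nonneg b c). pose proof (Kabs_nonneg b (f x)).
  pose proof (norm_nonneg (P x)).
  assert (C3 : Kabs b c <= 3 * Kabs b a).
  { assert (0 < Kabs b (f x)).
    { destruct H3; auto. rewrite <- H3 in S1. nra. }
    apply (Rmult_le_reg_r (Kabs b (f x))); auto. nra. }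
  fold A. nra.
Qed.

Open Scope nat_scope.

Lemma nodup_map_inj (g : nat -> nat) (l : list nat) : NoDup l ->
  (forall x y, In x l -> In y l -> g x = g y -> x = y) -> NoDup (map g l).
Proof.
  induction l as [|a l IH]; simpl; intros Hn Hi; [constructor|].
  inversion Hn; subst. constructor.
  - intros Hin. apply in_map_iff in Hin. destruct Hin as [y [Hy Hy']].
    assert (y = a) by (apply Hi; auto). subst. contradiction.
  - apply IH; auto.
Qed.

Lemma pigeon (N : nat) (g : nat -> nat) : (forall k, k <= N -> g k < N) ->
  exists j k, j < k <= N /\ g j = g k.
Proof.
  intros Hg. apply NNPP. intros Hc.
  assert (Hnd : NoDup (map g (seq 0 (S N)))).
  { apply nodup_map_inj; [apply seq_NoDup|].
    intros x y Hx Hy Hxy. apply in_seq in Hx, Hy.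
    destruct (Nat.lt_trichotomy x y) as [H|[H|H]]; auto; exfalso; apply Hc.
    - exists x, y. split; [lia|auto].
    - exists y, x. split; [lia|auto]. }
  apply NoDup_incl_length with (l' := seq 0 N) in Hnd.
  - rewrite length_map, !length_seq in Hnd. lia.
  - intros z Hz. apply in_map_iff in Hz. destruct Hz as [k [<- Hk]].
    apply in_seq in Hk. apply in_seq. specialize (Hg k). lia.
Qed.

Open Scope R_scope.


Lemma K1_neq_K0 b : K1 b <> K0 b.
Proof. destruct b; simpl; [intros H; injection H; lra | lra]. Qed.

Lemma Kopp_eq0 b a : Kopp b a = K0 b -> a = K0 b.
Proof. destruct b; simpl; [destruct a; intros H; injection H; intros; f_equal; lra | lra]. Qed.

Lemma kernel_vec {b} {X : NormedSpace b} (f : X -> K b) : bounded_functional f ->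
  dim_gt1 X -> exists w : X, w <> vzero X /\ f w = K0 b.
Proof.
  intros [Fa [Fs _]] [u [v Hind]].
  destruct (classic (f u = K0 b)) as [Hu|Hu].
  - exists u. split; auto. intros ->. apply (K1_neq_K0 b).
    apply (Hind (K1 b) (K0 b)). rewrite vscal_a0, vscal_0v. apply vadd_zero.
  - exists (vadd (vscal (f v) u) (vscal (Kopp b (f u)) v)). split.
    + intros H. apply Hind in H. destruct H as [_ H]. apply Hu, Kopp_eq0, H.
    + rewrite Fa, !Fs. destruct b; simpl in *;
      [destruct (f u), (f v); unfold Cadd, Cmul; simpl; f_equal; ring | ring].
Qed.

Theorem lemma2p2 (b : bool) (X : NormedSpace b) (x : X) (T : X -> X) (f : X -> K b) :
  complete X -> dim_gt1 X -> bounded_operator T ->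
  bounded_functional f -> (exists v : X, f v <> K0 b) ->
  (forall eps, eps > 0 -> exists N, forall n, (n >= N)%nat ->
      Kabs b (f (orbit T n x)) <= eps * norm (orbit T n x)) ->
  ~ supercyclic T x.
Proof.
  intros _ Hdim _ bf [y0 Hy0] Ho Hsc.
  destruct (kernel_vec f bf Hdim) as [w [Hw0 Hw]].
  pose proof bf as [Fa [Fs [M0 HM0]]].
  set (M := Rabs M0 + 1).
  assert (HM : forall u, Kabs b (f u) <= M * norm u).
  { intros u. eapply Rle_trans; [apply HM0|]. pose proof (norm_nonneg u).
    pose proof (Rle_abs M0). unfold M. nra. }
  assert (HMp : 0 < M) by (unfold M; pose proof (Rabs_pos M0); lra).
  set (A := Kabs b (f y0)). assert (HA : 0 < A) by (apply Kabs_pos; auto).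
  set (W := norm w). assert (HW : 0 < W) by (apply norm_pos; auto).
  set (B := norm y0 + W). assert (HB : 0 < B) by (unfold B; pose proof (norm_nonneg y0); lra).
  set (eps := A / (4 * (B + 1))).
  assert (Heps : eps > 0) by (unfold eps; apply Rdiv_lt_0_compat; lra).
  destruct (Ho eps Heps) as [N HN].
  set (h := / (INR N + 1)).
  assert (HN1 : 0 < INR N + 1) by (pose proof (pos_INR N); lra).
  assert (Hh : 0 < h) by (unfold h; apply Rinv_0_lt_compat; lra).
  set (pts := fun k : nat => vadd y0 (vscal (Kr b (INR k * h)) w)).
  assert (Hpf : forall k, f (pts k) = f y0).
  { intros k. unfold pts. rewrite Fa, Fs, Hw, Kmul_0, Kadd_0. reflexivity. }
  assert (Hpn : forall k, (k <= N)%nat -> norm (pts k) <= B).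
  { intros k Hk. unfold pts. eapply Rle_trans; [apply norm_triangle|].
    rewrite norm_scal, Kabs_Kr. fold W. unfold B.
    assert (Rabs (INR k * h) <= 1).
    { apply le_INR in Hk. pose proof (pos_INR k).
      rewrite Rabs_pos_eq by (apply Rmult_le_pos; lra).
      unfold h. apply (Rmult_le_reg_r (INR N + 1)); auto.
      rewrite Rmult_assoc, Rinv_l by lra. lra. }
    nra. }
  set (L := A + M * B). assert (HL : 0 < L) by (unfold L; nra).
  set (delta := Rmin 1 (Rmin (A / (2 * M)) (h * A * W / (8 * L)))).
  assert (Hd1 : delta <= 1) by apply Rmin_l.
  assert (Hd2 : M * delta <= A / 2).
  { assert (delta <= A / (2 * M)) by (eapply Rle_trans; [apply Rmin_r|apply Rmin_l]).
    apply (Rmult_le_compat_l M) in H; [|lra].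
    replace (M * (A / (2 * M))) with (A / 2) in H by (field; lra). exact H. }
  assert (Hd3 : delta <= h * A * W / (8 * L)) by (eapply Rle_trans; [apply Rmin_r|apply Rmin_r]).
  assert (Hd0 : 0 < delta).
  { unfold delta. apply Rmin_glb_lt; [lra|]. apply Rmin_glb_lt.
    - apply Rdiv_lt_0_compat; lra.
    - apply Rdiv_lt_0_compat; [|lra]. apply Rmult_lt_0_compat; [|lra]. nra. }
  assert (Hex : forall k, exists zn : K b * nat,
    norm (vsub (vscal (fst zn) (orbit T (snd zn) x)) (pts k)) < delta).
  { intros k. destruct (Hsc (pts k) delta Hd0) as [z [n Hzn]]. exists (z, n). exact Hzn. }
  set (F := fun k => proj1_sig (constructive_indefinite_description _ (Hex k))).
  assert (HF : forall k, norm (vsub (vscal (fst (F k)) (orbit T (snd (F k)) x)) (pts k)) < delta).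
  { intros k. unfold F. exact (proj2_sig (constructive_indefinite_description _ (Hex k))). }
  destruct (classic (exists k, (k <= N)%nat /\ (N <= snd (F k))%nat)) as [[k [Hk Hk2]]|Hall].
  -
    specialize (HF k). set (z := fst (F k)) in *. set (n := snd (F k)) in *.
    set (xn := orbit T n x) in *.
    specialize (HN n Hk2). fold xn in HN.
    set (d := vsub (vscal z xn) (pts k)) in *.
    assert (ep : pts k = vadd (vscal z xn) (vopp d)) by apply vsub_decomp2.
    assert (S1 : A <= Kabs b z * Kabs b (f xn) + M * delta).
    { unfold A. rewrite <- (Hpf k), ep, Fa, f_opp, Fs by auto.
      eapply Rle_trans; [apply Kabs_tri|]. rewrite Kabs_opp, Kabs_mul.
      pose proof (HM d). pose proof (norm_nonneg d). nra. }
    assert (S2 : norm (vscal z xn) <= delta + B).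
    { assert (e1 : vscal z xn = vadd d (pts k)) by (symmetry; apply vsub_decomp).
      rewrite e1. eapply Rle_trans; [apply norm_triangle|]. pose proof (Hpn k Hk). lra. }
    rewrite norm_scal in S2.
    pose proof (Kabs_nonneg b z).
    assert (Kabs b z * Kabs b (f xn) <= eps * (Kabs b z * norm xn)).
    { replace (eps * (Kabs b z * norm xn)) with (Kabs b z * (eps * norm xn)) by ring.
      apply Rmult_le_compat_l; auto. }
    assert (eps * (Kabs b z * norm xn) <= eps * (B + 1)).
    { apply Rmult_le_compat_l; lra. }
    assert (eps * (B + 1) = A / 4) by (unfold eps; field; lra).
    lra.
  - assert (Hg : forall k, (k <= N)%nat -> (snd (F k) < N)%nat).
    { intros k Hk. destruct (Nat.lt_ge_cases (snd (F k)) N); auto. exfalso; apply Hall; eauto. }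
    destruct (pigeon N (fun k => snd (F k)) Hg) as [j [k [Hjk Hjk2]]].
    simpl in Hjk2.
    pose proof (HF j) as Hj. pose proof (HF k) as Hk. rewrite <- Hjk2 in Hk.
    set (s := INR k * h - INR j * h).
    assert (Hq : pts k = vadd (pts j) (vscal (Kr b s) w)).
    { unfold pts. rewrite <- vadd_assoc, <- vscal_adds, Kadd_Kr. f_equal. f_equal. f_equal.
      unfold s; ring. }
    assert (HpA : 0 < Kabs b (f (pts j))) by (rewrite Hpf; exact HA).
    pose proof (sep f M (pts j) (pts k) w _ _ _ delta s B bf HM HMp Hw Hq HpA
      (Hpn j ltac:(lia)) Hj Hk ltac:(rewrite Hpf; exact Hd2)) as Hs.
    rewrite Hpf in Hs. fold A W in Hs.
    assert (Hsh : h <= Rabs s).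
    { assert (1 <= INR k - INR j).
      { rewrite <- minus_INR by lia. replace 1 with (INR 1) by reflexivity. apply le_INR. lia. }
      unfold s. rewrite Rabs_pos_eq by nra. nra. }
    assert (h * A * W <= Rabs s * A * W).
    { apply Rmult_le_compat_r; [lra|]. apply Rmult_le_compat_r; lra. }
    assert (4 * L * delta <= h * A * W / 2).
    { apply (Rmult_le_compat_l (4 * L)) in Hd3; [|lra].
      replace (4 * L * (h * A * W / (8 * L))) with (h * A * W / 2) in Hd3 by (field; lra).
      exact Hd3. }
    assert (0 < h * A * W) by (apply Rmult_lt_0_compat; [apply Rmult_lt_0_compat|]; lra).
    fold L in Hs. lra.
Qed.
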